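(* Let $(\gamma_\nu)_{\nu\ge 0}$ be complex numbers, let $f(z)=\sum_{\nu=0}^{\infty}\gamma_\nu z^\nu$ be the corresponding formal power series, and let $f_n(z)=\sum_{\nu=0}^{n}\gamma_\nu z^\nu$ be its partial sums. Work in the field $\mathbb{C}((z))$ of formal Laurent series. Define numbers $C_k^{(n)}$ by $C_0^{(n)}=-\gamma_{n+1}$ and $C_{k+1}^{(n)}=C_k^{(n+2)}-\bigl[C_k^{(n+1)}\bigr]^2/C_k^{(n)}$ for $k,n\in\mathbb{N}_0$, and assume that $C_k^{(n)}\neq 0$ for all $k,n\in\mathbb{N}_0$ (in particular $\gamma_\nu\ne 0$ for all $\nu\ge1$). Let $\mathcal{A}_k^{(n)}$ be Aitken's iterated $\Delta^2$ process applied to $s_n=f_n(z)$: $\mathcal{A}_0^{(n)}=f_n(z)$, $\mathcal{A}_{k+1}^{(n)}=\mathcal{A}_k^{(n)}-\bigl[\Delta\mathcal{A}_k^{(n)}\bigr]^2/\Delta^2\mathcal{A}_k^{(n)}$, where $\Delta$ acts on the superscript: $\Delta\mathcal{A}_k^{(n)}=\mathcal{A}_k^{(n+1)}-\mathcal{A}_k^{(n)}$. Then all $\mathcal{A}_k^{(n)}$ are well defined elements of $\mathbb{C}[[z]]$, and for all $k,n\in\mathbb{N}_0$: (i) $\mathcal{A}_k^{(n)}=f(z)+z^{n+2k+1}R_k^{(n)}(z)$ with $R_k^{(n)}(z)\in\mathbb{C}[[z]]$ having constant term $C_k^{(n)}$; in particular $f(z)-\mathcal{A}_k^{(n)}=O(z^{n+2k+1})$;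 (ii) $\mathcal{A}_k^{(n)}=f_{n+2k}(z)+G_k^{(n)}z^{n+2k+1}+O(z^{n+2k+2})$, where $G_k^{(n)}=C_k^{(n)}+\gamma_{n+2k+1}$ and the numbers $G_k^{(n)}$ satisfy $G_0^{(n)}=0$, $G_1^{(n)}=\gamma_{n+2}^2/\gamma_{n+1}$, and $G_{k+1}^{(n)}=G_k^{(n+2)}+\dfrac{\bigl[\gamma_{n+2k+2}-G_k^{(n+1)}\bigr]^2}{\gamma_{n+2k+1}-G_k^{(n)}}$ for $k,n\in\mathbb{N}_0$.
   Context: $\mathbb{N}_0=\{0,1,2,\dots\}$. $O(z^m)$ denotes an element of $z^m\mathbb{C}[[z]]$. The number $G_k^{(n)}$ is interpreted as the prediction for the coefficient $\gamma_{n+2k+1}$, the first coefficient not used in computing $\mathcal{A}_k^{(n)}$ (which uses $f_n,\dots,f_{n+2k}$). *)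

(* Defs.v *)
From HB Require Import structures.
From mathcomp Require Import all_boot all_order all_algebra.
From mathcomp Require Import complex.
From mathcomp Require Import Rstruct.
Set Implicit Arguments. Unset Strict Implicit. Unset Printing Implicit Defensive.
Import Order.TTheory GRing.Theory Num.Theory.
Local Open Scope ring_scope.

Definition C : fieldType := (Rdefinitions.R)[i].

Definition fps := nat -> C.

Definition fps_add (a b : fps) : fps := fun m => a m + b m.
Definition fps_sub (a b : fps) : fps := fun m => a m - b m.
Definition fps_mul (a b : fps) : fps :=
  fun m => \sum_(i < m.+1) a i * b (m - i)%N.
Definition fps_shift (d : nat) (a : fps) : fps :=
  fun m => if (d <= m)%N then a (m - d)%N else 0.

Definition partial_sum (gamma : nat -> C) (n : nat) : fps :=
  fun m => if (m <= n)%N then gamma m else 0.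

Definition Delta (A : nat -> fps) (n : nat) : fps := fps_sub (A n.+1) (A n).
Definition Delta2 (A : nat -> fps) (n : nat) : fps :=
  fps_sub (Delta A n.+1) (Delta A n).

Fixpoint Cnum (gamma : nat -> C) (k : nat) : nat -> C :=
  match k with
  | 0 => fun n => - gamma n.+1
  | k'.+1 => fun n => Cnum gamma k' n.+2 - (Cnum gamma k' n.+1) ^+ 2 / Cnum gamma k' n
  end.

Definition Gnum (gamma : nat -> C) (k n : nat) : C :=
  Cnum gamma k n + gamma (n + 2 * k + 1)%N.

(* A : nat -> nat -> fps is Aitken's iterated Delta^2 process applied to f_n,
   computed in C((z)) and lying in C[[z]]: A_0^(n) = f_n, every
   Delta^2 A_k^(n) is a nonzero series, and A_{k+1}^(n) is the (unique, since
   C((z)) is a field) series with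
   A_{k+1}^(n) * Delta^2 A_k^(n) = A_k^(n) * Delta^2 A_k^(n) - (Delta A_k^(n))^2,
   i.e. A_{k+1}^(n) = A_k^(n) - (Delta A_k^(n))^2 / Delta^2 A_k^(n). *)
Definition is_aitken (gamma : nat -> C) (A : nat -> nat -> fps) : Prop :=
  (forall n, A 0%N n = partial_sum gamma n) /\
  (forall k n, Delta2 (A k) n <> (fun _ => 0)) /\
  (forall k n,
     fps_mul (A k.+1 n) (Delta2 (A k) n) =
     fps_sub (fps_mul (A k n) (Delta2 (A k) n))
             (fps_mul (Delta (A k) n) (Delta (A k) n))).

(* Main.v *)
Require Import Defs.
From HB Require Import structures.
From mathcomp Require Import all_boot all_order all_algebra.
From mathcomp Require Import complex.
From mathcomp Require Import zify.
From Stdlib Require Import Ring FunctionalExtensionality.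
Import Order.TTheory GRing.Theory Num.Theory.
Local Open Scope ring_scope.

Definition fzero : fps := fun _ => 0.
Definition fone : fps := fun m => if m == 0%N then 1 else 0.
Definition fopp (a : fps) : fps := fun m => - a m.

Definition tr (m : nat) (a : fps) : {poly C} := \poly_(i < m.+1) a i.

Lemma mulE (a b : fps) m i : (i <= m)%N ->
  fps_mul a b i = (tr m a * tr m b)`_i.
Proof.
move=> him; rewrite coefM /fps_mul; apply: eq_bigr => j _.
rewrite /tr !coef_poly.
have hj : (j < m.+1)%N by have := ltn_ord j; lia.
have hj2 : (i - j < m.+1)%N by lia.
by rewrite hj hj2.
Qed.

Lemma fmulC (a b : fps) : fps_mul a b = fps_mul b a.
Proof.
apply: functional_extensionality => m.
by rewrite (@mulE a b m m (leqnn m)) (@mulE b a m m (leqnn m)) mulrC.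
Qed.

Lemma fmulA (a b c : fps) : fps_mul a (fps_mul b c) = fps_mul (fps_mul a b) c.
Proof.
apply: functional_extensionality => m.
have -> : fps_mul a (fps_mul b c) m = (tr m a * (tr m b * tr m c))`_m.
  rewrite coefM /fps_mul; apply: eq_bigr => j _.
  have hj : (j < m.+1)%N by have := ltn_ord j; lia.
  rewrite /tr coef_poly hj; congr (_ * _).
  by rewrite -mulE //; lia.
have -> : fps_mul (fps_mul a b) c m = ((tr m a * tr m b) * tr m c)`_m.
  rewrite coefM /fps_mul; apply: eq_bigr => j _.
  have hj : (m - j < m.+1)%N by lia.
  rewrite /tr coef_poly hj; congr (_ * _).
  rewrite -mulE //; have := ltn_ord j; lia.
by rewrite mulrA.
Qed.

Lemma fmul1 (a : fps) : fps_mul fone a = a.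
Proof.
apply: functional_extensionality => m.
rewrite /fps_mul big_ord_recl /= /fone eqxx mul1r subn0 (@big1 C 0 +%R) ?addr0 //.
by move=> i _; rewrite /bump /= mul0r.
Qed.

Lemma fdistr (a b c : fps) : fps_mul (fps_add a b) c = fps_add (fps_mul a c) (fps_mul b c).
Proof.
apply: functional_extensionality => m.
rewrite /fps_mul /fps_add -big_split /=; apply: eq_bigr => i _; by rewrite /fps_add mulrDl.
Qed.

Lemma fps_rt : ring_theory fzero fone fps_add fps_mul fps_sub fopp (@eq fps).
Proof.
split.
- move=> x; apply: functional_extensionality => m; exact: add0r.
- move=> x y; apply: functional_extensionality => m; exact: addrC.
- move=> x y z; apply: functional_extensionality => m; exact: addrA.
- exact: fmul1.
- exact: fmulC.
- exact: fmulA.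
- exact: fdistr.
- by [].
- move=> x; apply: functional_extensionality => m; exact: subrr.
Qed.

Add Ring fpsRing : fps_rt.

Lemma shiftE d (a : fps) : fps_shift d a = fps_mul (fps_shift d fone) a.
Proof.
apply: functional_extensionality => m.
rewrite /fps_mul /fps_shift; case: (leqP d m) => h.
  have h' : (d < m.+1)%N by lia.
  rewrite (bigD1 (Ordinal h')) //= leqnn subnn /fone eqxx mul1r.
  rewrite (@big1 C 0 +%R) ?addr0 // => i /eqP ne.
  case: ifP => hi; last by rewrite mul0r.
  have : (i - d != 0)%N.
    apply/eqP => e; apply: ne; apply: val_inj => /=; lia.
  by move/negbTE => ->; rewrite mul0r.
rewrite (@big1 C 0 +%R) // => i _.
have : (d <= i)%N = false by have := ltn_ord i; lia.
by move=> ->; rewrite mul0r.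
Qed.

Lemma shiftD d1 d2 : fps_shift (d1 + d2) fone = fps_mul (fps_shift d1 fone) (fps_shift d2 fone).
Proof.
rewrite -shiftE; apply: functional_extensionality => m.
rewrite /fps_shift /fone.
case: (leqP (d1 + d2) m) => h.
  have -> : (d1 <= m)%N by lia.
  have -> : (d2 <= m - d1)%N by lia.
  by rewrite subnDA.
case: ifP => // h1; case: ifP => // h2; lia.
Qed.

Fixpoint invtab (a : fps) (m : nat) : fps :=
  match m with
  | 0 => fun j => if j == 0%N then (a 0%N)^-1 else 0
  | m'.+1 => fun j => if j == m'.+1 then
        - (a 0%N)^-1 * \sum_(i < m'.+1) a i.+1 * invtab a m' (m' - i)%N
      else invtab a m' j
  end.

Definition finv (a : fps) : fps := fun m => invtab a m m.

Lemma invtab_stable a m j : (j <= m)%N -> invtab a m j = invtab a j j.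
Proof.
elim: m j => [|m IH] j hj.
  by have -> : j = 0%N by lia.
case: (eqVneq j m.+1) => [-> //|ne].
rewrite /= (negbTE ne).
have hj' : (j <= m)%N by lia.
by rewrite (IH j hj').
Qed.

Lemma finvP a : a 0%N != 0 -> fps_mul a (finv a) = fone.
Proof.
move=> ha; apply: functional_extensionality => m; case: m => [|m].
  by rewrite /fps_mul big_ord1 /finv /= mulfV.
rewrite /fps_mul big_ord_recl /finv /= eqxx /fone /=.
rewrite mulrA mulrN mulfV // mulN1r.
have -> : \sum_(i < m.+1) a (bump 0 i) * invtab a (m.+1 - bump 0 i)%N (m.+1 - bump 0 i)%N
        = \sum_(i < m.+1) a i.+1 * invtab a m (m - i)%N.
  apply: eq_bigr => i _; rewrite /bump /= add1n subSS invtab_stable //; lia.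
by rewrite addNr.
Qed.

Lemma mul0E (a b : fps) : fps_mul a b 0%N = a 0%N * b 0%N.
Proof. by rewrite /fps_mul big_ord1. Qed.

Definition Dk (R0 R1 R2 : fps) : fps :=
  fps_add (fps_sub (fps_shift 2 R2) (fps_shift 1 (fps_add R1 R1))) R0.

Lemma Dk0 R0 R1 R2 : Dk R0 R1 R2 0%N = R0 0%N.
Proof. by rewrite /Dk /fps_add /fps_sub /fps_shift /= subrr add0r. Qed.

Fixpoint Rk (gamma : nat -> C) (k : nat) : nat -> fps :=
  match k with
  | 0 => fun n m => - gamma (n.+1 + m)%N
  | k'.+1 => fun n =>
      fps_mul (fps_sub (fps_mul (Rk gamma k' n) (Rk gamma k' n.+2))
                       (fps_mul (Rk gamma k' n.+1) (Rk gamma k' n.+1)))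
              (finv (Dk (Rk gamma k' n) (Rk gamma k' n.+1) (Rk gamma k' n.+2)))
  end.

Lemma Rk0 gamma : (forall k n, Cnum gamma k n != 0) ->
  forall k n, Rk gamma k n 0%N = Cnum gamma k n.
Proof.
move=> hC; elim=> [|k IH] n; first by rewrite /= addn0.
rewrite /= mul0E /fps_sub !mul0E /finv /= Dk0 !IH.
have h0 := hC k n.
by rewrite mulrBl -expr2 [Cnum gamma k n * _]mulrC -mulrA mulfV // mulr1.
Qed.

Definition fz : fps := fps_shift 1 fone.

Lemma shS d : fps_shift d.+1 fone = fps_mul (fps_shift d fone) fz.
Proof. by rewrite -shiftD addn1. Qed.

Lemma delta2_alg (f R0 R1 R2 : fps) N :
  fps_sub (fps_sub (fps_add f (fps_shift N.+2 R2)) (fps_add f (fps_shift N.+1 R1)))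
          (fps_sub (fps_add f (fps_shift N.+1 R1)) (fps_add f (fps_shift N R0)))
  = fps_shift N (Dk R0 R1 R2).
Proof.
rewrite /Dk (shiftE N.+2 R2) (shiftE N.+1 R1) (shiftE N R0) (shiftE N (fps_add _ _)).
rewrite (shiftE 2 R2) (shiftE 1 (fps_add R1 R1)) (shS N.+1) (shS N) (shS 1).
rewrite -/fz.
set P := fps_shift N fone.
ring.
Qed.

Lemma aitken_alg (f R0 R1 R2 I : fps) N :
  fps_mul (Dk R0 R1 R2) I = fone ->
  fps_mul (fps_add f (fps_shift N.+2 (fps_mul (fps_sub (fps_mul R0 R2) (fps_mul R1 R1)) I)))
    (fps_sub (fps_sub (fps_add f (fps_shift N.+2 R2)) (fps_add f (fps_shift N.+1 R1)))
          (fps_sub (fps_add f (fps_shift N.+1 R1)) (fps_add f (fps_shift N R0))))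
  = fps_sub
     (fps_mul (fps_add f (fps_shift N R0))
      (fps_sub (fps_sub (fps_add f (fps_shift N.+2 R2)) (fps_add f (fps_shift N.+1 R1)))
          (fps_sub (fps_add f (fps_shift N.+1 R1)) (fps_add f (fps_shift N R0)))))
     (fps_mul (fps_sub (fps_add f (fps_shift N.+1 R1)) (fps_add f (fps_shift N R0)))
              (fps_sub (fps_add f (fps_shift N.+1 R1)) (fps_add f (fps_shift N R0)))).
Proof.
move=> HI.
rewrite delta2_alg.
rewrite /Dk in HI *.
rewrite (shiftE N.+2 (fps_mul _ I)) (shiftE N.+1 R1) (shiftE N R0) (shiftE N (fps_add _ _)).
rewrite (shiftE 2 R2) (shiftE 1 (fps_add R1 R1)) (shS N.+1) (shS N) (shS 1) -/fz.
rewrite (shiftE 2 R2) (shiftE 1 (fps_add R1 R1)) (shS 1) -/fz in HI.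
set P := fps_shift N fone.
set D := fps_add (fps_sub (fps_mul (fps_mul fz fz) R2) (fps_mul fz (fps_add R1 R1))) R0 in HI *.
transitivity (fps_add (fps_mul f (fps_mul P D))
   (fps_mul (fps_mul (fps_mul P P) (fps_mul fz fz))
      (fps_mul (fps_sub (fps_mul R0 R2) (fps_mul R1 R1)) (fps_mul D I)))).
  ring.
rewrite HI /D; ring.
Qed.

Definition Aa (gamma : nat -> C) (k n : nat) : fps :=
  fps_add gamma (fps_shift (n + 2 * k + 1) (Rk gamma k n)).

Lemma Aa_S1 gamma k n :
  Aa gamma k n.+1 = fps_add gamma (fps_shift (n + 2 * k + 1).+1 (Rk gamma k n.+1)).
Proof. by rewrite /Aa; have -> : (n.+1 + 2 * k + 1 = (n + 2 * k + 1).+1)%N by lia. Qed.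

Lemma Aa_S2 gamma k n :
  Aa gamma k n.+2 = fps_add gamma (fps_shift (n + 2 * k + 1).+2 (Rk gamma k n.+2)).
Proof. by rewrite /Aa; have -> : (n.+2 + 2 * k + 1 = (n + 2 * k + 1).+2)%N by lia. Qed.

Lemma Aa_Sk gamma k n :
  Aa gamma k.+1 n = fps_add gamma (fps_shift (n + 2 * k + 1).+2
     (fps_mul (fps_sub (fps_mul (Rk gamma k n) (Rk gamma k n.+2))
                       (fps_mul (Rk gamma k n.+1) (Rk gamma k n.+1)))
              (finv (Dk (Rk gamma k n) (Rk gamma k n.+1) (Rk gamma k n.+2))))).
Proof. by rewrite /Aa; have -> : (n + 2 * k.+1 + 1 = (n + 2 * k + 1).+2)%N by lia. Qed.

Theorem mainTheorem1 (gamma : nat -> C) :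
  (forall k n, Cnum gamma k n != 0) ->
  exists A : nat -> nat -> fps,
    is_aitken gamma A /\
    forall k n,
      (* (i) *)
      (exists Rkn : fps,
          Rkn 0%N = Cnum gamma k n /\
          A k n = fps_add gamma (fps_shift (n + 2 * k + 1) Rkn)) /\
      (forall m, (m < n + 2 * k + 1)%N -> A k n m = gamma m) /\
      (* (ii) *)
      (forall m, (m <= n + 2 * k + 1)%N ->
          A k n m = partial_sum gamma (n + 2 * k) m
                    + (if m == (n + 2 * k + 1)%N then Gnum gamma k n else 0)) /\
      Gnum gamma 0 n = 0 /\
      Gnum gamma 1 n = gamma (n + 2)%N ^+ 2 / gamma (n + 1)%N /\
      Gnum gamma k.+1 n =
        Gnum gamma k (n + 2)%N
        + (gamma (n + 2 * k + 2)%N - Gnum gamma k (n + 1)%N) ^+ 2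
          / (gamma (n + 2 * k + 1)%N - Gnum gamma k n).
Proof.
move=> hC; exists (Aa gamma); split.
  split; [|split].
  - move=> n; apply: functional_extensionality => m.
    rewrite /Aa /partial_sum /fps_add /fps_shift /= muln0 addn0.
    case: (leqP m n) => h.
      have -> : (n + 1 <= m)%N = false by lia.
      by rewrite addr0.
    have -> : (n + 1 <= m)%N = true by lia.
    have -> : (n.+1 + (m - (n + 1)))%N = m by lia.
    by rewrite subrr.
  - move=> k n; rewrite /Delta2 /Delta Aa_S2 Aa_S1 /Aa delta2_alg => H.
    have := congr1 (fun g => g (n + 2 * k + 1)%N) H.
    rewrite /fps_shift /= leqnn subnn Dk0 Rk0 //.
    by move=> e; move: (hC k n); rewrite e eqxx.
  - move=> k n; rewrite /Delta2 /Delta Aa_Sk Aa_S2 Aa_S1 /Aa.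
    apply: aitken_alg; apply: finvP.
    by rewrite Dk0 Rk0.
move=> k n; split; [|split; [|split; [|split; [|split]]]].
- by exists (Rk gamma k n); split; [rewrite Rk0|].
- move=> m hm; rewrite /Aa /fps_add /fps_shift.
  have -> : (n + 2 * k + 1 <= m)%N = false by lia.
  by rewrite addr0.
- move=> m hm; rewrite /Aa /fps_add /fps_shift /partial_sum.
  case: (ltnP m (n + 2 * k + 1)) => h.
    have -> : (m <= n + 2 * k)%N = true by lia.
    have -> : (m == n + 2 * k + 1)%N = false by apply/eqP; lia.
    by rewrite !addr0.
  have e : m = (n + 2 * k + 1)%N by lia.
  subst m.
  rewrite subnn eqxx Rk0 //.
  have -> : (n + 2 * k + 1 <= n + 2 * k)%N = false by lia.
  by rewrite add0r /Gnum addrC.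
- by rewrite /Gnum /= muln0 addn0 addn1 addNr.
- rewrite /Gnum /=.
  have -> : (n + 2 * 1 + 1 = n.+3)%N by lia.
  rewrite addn2 addn1 sqrrN invrN mulrN opprK.
  by rewrite addrAC addNr add0r.
- rewrite /Gnum [Cnum gamma k.+1 n]/=.
  have -> : (n + 2 = n.+2)%N by lia.
  have -> : (n + 1 = n.+1)%N by lia.
  have -> : (n + 2 * k.+1 + 1 = n.+2 + 2 * k + 1)%N by lia.
  have -> : (n.+1 + 2 * k + 1 = n + 2 * k + 2)%N by lia.
  have hx : forall x y : C, x - (y + x) = - y.
    by move=> x y; rewrite opprD addrCA subrr addr0.
  rewrite !hx sqrrN invrN mulrN.
  by rewrite addrAC.
Qed.
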